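(* Let $M$ be a positive integer with $M\not\equiv0\bmod3$, $L$ a positive divisor of $M$ with $L^*>2$, and $\ell$ the number of prime divisors of $L$. Then $J_1(L,M)=\varphi(L^* )\big(M^2/L^*+(-1)^\ell(8-9\epsilon)\big)/24$, where $\epsilon=1$ if $M$ is odd, $\epsilon=2$ if $M\equiv2\bmod4$ and $L^*$ is even, and $\epsilon=0$ otherwise.
   Context: For a positive integer $n$, $n^*$ denotes the product of the distinct prime divisors of $n$, and $\varphi$ is Euler's totient function. For a positive integer $M$, a positive divisor $L$ of $M$ and an integer $k\ge0$, $J_k(L,M)=\sum_u u^k$, the sum over integers $u$ with $0<u<M/2$, $\gcd(u,L)=1$ and $u\equiv -M\bmod 3$. *)

(* Defs.v *)
From HB Require Import structures.
From mathcomp Require Import all_boot all_order all_algebra.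
Set Implicit Arguments. Unset Strict Implicit. Unset Printing Implicit Defensive.

Definition radn (n : nat) : nat := \prod_(p <- primes n) p.

Definition J (k L M : nat) : nat :=
  \sum_(1 <= u < M | (2 * u < M) && coprime u L && ((u + M) %% 3 == 0)) u ^ k.

Definition eps (L M : nat) : nat :=
  if odd M then 1
  else if (M %% 4 == 2) && ~~ odd (radn L) then 2 else 0.

(* Main.v *)
Require Import Defs.
From mathcomp Require Import all_boot all_algebra.
From mathcomp Require Import zify ring.

Lemma sum_mult (p m : nat) (P : pred nat) (F : nat -> nat) : 0 < p ->
  \sum_(0 <= u < p * m | P u && (p %| u)) F u = \sum_(0 <= v < m | P (p * v)) F (p * v).
Proof.
move=> p0; elim: m => [|m IH]; first by rewrite muln0 !big_geq.
rewrite mulnSr (big_cat_nat _ (n := p * m)) ?leq_addr //= IH.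
rewrite [RHS]big_mkcond [RHS]big_nat_recr //= -big_mkcond /=; congr (_ + _).
rewrite big_mkcond big_ltn; last by rewrite -{1}(addn0 (p * m)) ltn_add2l.
rewrite (dvdn_mulr _ (dvdnn p)) andbT.
idtac.
rewrite big_nat_cond big1; first by rewrite [LHS]addn0.
move=> u /andP[/andP[Hlo Hhi] _].
case: ifP => // /andP[_ /dvdnP[k Hk]]; subst u.
move: Hlo Hhi; rewrite [k * p]mulnC -mulnSr ltn_pmul2l // ltn_pmul2l //.
by move=> H1 H2; lia.
Qed.

Definition Js (s : seq nat) (M : nat) : nat :=
  \sum_(0 <= u < M | (2 * u < M) && all (fun q => ~~ (q %| u)) s && ((u + M) %% 3 == 0)) u.

Lemma Js_rec p s M : prime p -> p != 3 -> p \notin s -> all prime s -> p %| M ->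
  Js s M = Js (p :: s) M + p * Js s (M %/ p).
Proof.
move=> pp p3 ps alls /dvdnP[m ->]; rewrite [m * p]mulnC mulKn ?prime_gt0 //.
rewrite /Js (bigID (fun u => p %| u)) /= addnC; congr (_ + _).
  by apply: eq_bigl => u /=; case: (p %| u); rewrite /= ?andbT ?andbF.
rewrite sum_mult ?prime_gt0 // big_distrr /=; apply: eq_bigl => v.
have cop : coprime 3 p by rewrite prime_coprime // dvdn_prime2 // eq_sym.
rewrite mulnCA ltn_pmul2l ?prime_gt0 // -mulnDr.
have -> : (p * (v + m) %% 3 == 0) = ((v + m) %% 3 == 0).
  by have := Gauss_dvdr (v + m) cop; rewrite /dvdn.
congr (_ && _ && _); apply: eq_in_all => q qs /=.
rewrite Euclid_dvdM ?(allP alls) // (dvdn_prime2 ((allP alls) q qs) pp).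
have -> : (q == p) = false by apply/negbTE/eqP => E; move: ps; rewrite -E qs.
by [].
Qed.

Lemma Js_nilE M : Js [::] M = \sum_(0 <= u < M.+1 %/ 2 | (u + M) %% 3 == 0) u.
Proof.
rewrite /Js [RHS](@big_nat_widen _ _ _ 0 (M.+1 %/ 2) M); last lia.
apply: eq_bigl => u /=; rewrite andbT andbC; congr (_ && _).
by apply/idP/idP => H; lia.
Qed.

Lemma small_cases M : M < 6 -> M %% 3 != 0 ->
  24 * Js [::] M + (if odd M then 1 else 6 * M) = M ^ 2 + (if odd M then 0 else 8).
Proof.
by case: M => [|[|[|[|[|[|M]]]]]] //= _ _; rewrite Js_nilE unlock.
Qed.

Lemma Js_nil M : M %% 3 != 0 ->
  24 * Js [::] M + (if odd M then 1 else 6 * M) = M ^ 2 + (if odd M then 0 else 8).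
Proof.
elim/ltn_ind: M => M IH H3.
case: (ltnP M 6) => HM; first exact: small_cases.
have E : M = (M - 6) + 6 by lia.
set N := M - 6 in E; have HN : N < M by lia.
have H3' : N %% 3 != 0 by apply/eqP => H; move: H3; rewrite E; lia.
have := IH N HN H3'; rewrite E !Js_nilE => {IH HN H3}.
rewrite (_ : (N + 6).+1 %/ 2 = (N.+1 %/ 2).+3); last lia.
move=> IHN; rewrite big_mkcond !big_nat_recr //= -big_mkcond /=.
rewrite (eq_bigl (fun u => (u + N) %% 3 == 0)); last first.
  by move=> u; apply/idP/idP => /eqP H; apply/eqP; lia.
set S := \sum_(0 <= u < _ | _) _.

have -> : odd (N + 6) = odd N by rewrite oddD addbF.
have sq : (N + 6) ^ 2 = N ^ 2 + 12 * N + 36 by ring.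
rewrite sq; move: IHN (modn2 N); rewrite -/S.
case: (odd N) => /= IHN Hm;
repeat (case: eqP => ?); lia.
Qed.

Import GRing.Theory Num.Theory.
Local Open Scope ring_scope.

Definition epsq (s : seq nat) (M : nat) : rat :=
  if odd M then 1 else if odd M./2 && (2 \in s) then 2 else 0.
Definition corr (s : seq nat) (M : nat) : rat :=
  if s is [::] then (if odd M then 0 else - (M%:R) / 4)
  else if s == [:: 2%N] then (if odd M then 0 else if odd M./2 then - (M%:R) / 4 else 0)
  else 0.
Definition Aq (s : seq nat) : rat := \prod_(q <- s) (1 - (q%:R)^-1).
Definition Bq (s : seq nat) : rat := \prod_(q <- s) (1 - q%:R).
Definition Fq (s : seq nat) (M : nat) : rat :=
  Aq s * ((M ^ 2)%N)%:R / 24 + Bq s * (8 - 9 * epsq s M) / 24 + corr s M.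

Lemma half_mul p m : odd p -> ~~ odd m -> (p * m)./2 = (p * m./2)%N.
Proof.
move=> op em; rewrite -{1}[m](subn0) -[0%N]/(nat_of_bool false) -(negbTE em) -halfK.
by rewrite -doubleMr doubleK.
Qed.

Lemma Fq_nil (M : nat) : (M %% 3 != 0)%N -> (Js [::] M)%:R = Fq [::] M.
Proof.
move=> H3; have := Js_nil M H3; rewrite /Fq /Aq /Bq /epsq /corr !big_nil in_nil andbF.
rewrite natrX.
case: (odd M) => /= E.
  have E2 : (24%:R * (Js [::] M)%:R + 1 : rat) = M%:R ^+ 2.
    by rewrite -natrM -natrX -(natrD _ _ 1) E addn0.
  by rewrite -E2; field.
have E2 : (24%:R * (Js [::] M)%:R + 6%:R * M%:R : rat) = M%:R ^+ 2 + 8%:R.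
  by rewrite -!natrM -natrX -!natrD E.
have -> : (M%:R ^+ 2 : rat) = 24%:R * (Js [::] M)%:R + 6%:R * M%:R - 8%:R.
  by rewrite E2 addrK.
by field.
Qed.

Lemma Aq_cons p s : Aq (p :: s) = (1 - (p%:R)^-1) * Aq s.
Proof. by rewrite /Aq big_cons. Qed.
Lemma Bq_cons p s : Bq (p :: s) = (1 - p%:R) * Bq s.
Proof. by rewrite /Bq big_cons. Qed.

Lemma Fq_rec (p : nat) s (m : nat) : prime p -> p \notin s -> (0 < m)%N ->
  Fq (p :: s) (p * m) = Fq s (p * m) - p%:R * Fq s m.
Proof.
move=> pp ps m0.
have p0 : p%:R != 0 :> rat by rewrite pnatr_eq0 -lt0n prime_gt0.
rewrite /Fq Aq_cons Bq_cons !natrX natrM.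
case: (even_prime pp) => [p2 | op].
  subst p.
  have e1 : epsq s (2 * m) = 0.
    by rewrite /epsq oddM /= mul2n doubleK (negbTE ps) andbF.
  have e2 : epsq s m = if odd m then 1 else 0.
    by rewrite /epsq (negbTE ps) andbF.
  have e3 : epsq (2 :: s) (2 * m) = if odd m then 2 else 0.
    by rewrite /epsq oddM /= mul2n doubleK in_cons eqxx andbT.
  rewrite e1 e2 e3 {e1 e2 e3}.
  case: s ps => [|q s'] ps.
    rewrite /corr /= oddM /= mul2n doubleK -mul2n natrM.
    by case: (odd m); field.
  have -> : corr (q :: s') (2 * m) = 0.
    rewrite /corr; case: eqP => // E; move: ps; by rewrite E in_cons eqxx.
  have -> : corr (q :: s') m = 0.
    rewrite /corr; case: eqP => // E; move: ps; by rewrite E in_cons eqxx.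
  have -> : corr [:: 2%N, q & s'] (2 * m) = 0 by rewrite /corr.
  by case: (odd m); field.
have p2 : (p == 2) = false by apply/negbTE; apply: contraTneq op => ->.
have e1 : epsq (p :: s) (p * m) = epsq s m.
  rewrite /epsq oddM op /=; case Hm: (odd m) => //=.
  by rewrite half_mul ?Hm // oddM op /= in_cons eq_sym p2.
have e2 : epsq s (p * m) = epsq s m.
  rewrite /epsq oddM op /=; case Hm: (odd m) => //=.
  by rewrite half_mul ?Hm // oddM op.
have c1 : corr (p :: s) (p * m) = 0 by rewrite /corr eqseq_cons p2.
have c2 : corr s (p * m) = p%:R * corr s m.
  clear ps e1 e2 c1; rewrite /corr oddM op /=; case Hm: (odd m) => /=.
    by case: s => [|q s'] /=; rewrite ?mulr0 //; case: ifP => _; rewrite mulr0.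
  rewrite half_mul ?Hm // oddM op /= natrM.
  case: s => [|q s']; first by field.
  by case: ifP => _; [case: ifP => _|]; rewrite ?mulr0 //; field.
rewrite e1 e2 c1 c2; by field.
Qed.

Lemma prime_dvd_prodl (q : nat) s : prime q -> all prime s ->
  (q %| \prod_(r <- s) r)%N = (q \in s).
Proof.
move=> pq; elim: s => [|r s IH] /=; first by rewrite big_nil dvdn1 in_nil; case: eqP => // E; rewrite E in pq.
move=> /andP[pr alls]; rewrite big_cons Euclid_dvdM // dvdn_prime2 // IH // in_cons.
Qed.

Lemma totient_prod s : all prime s -> uniq s ->
  totient (\prod_(r <- s) r) = (\prod_(r <- s) r.-1)%N.
Proof.
elim: s => [|r s IH] /=; first by rewrite !big_nil.
move=> /andP[pr alls] /andP[rs us]; rewrite !big_cons totient_coprime.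
  by rewrite totient_prime // IH.
by rewrite prime_coprime // prime_dvd_prodl.
Qed.

Lemma prod_gt0 s : all prime s -> (0 < \prod_(r <- s) r)%N.
Proof.
elim: s => [|r s IH] /=; first by rewrite big_nil.
by move=> /andP[pr alls]; rewrite big_cons muln_gt0 prime_gt0 // IH.
Qed.

Lemma Aq_eq s : all prime s ->
  Aq s = ((\prod_(r <- s) r.-1)%N)%:R / ((\prod_(r <- s) r)%N)%:R.
Proof.
elim: s => [|r s IH] /=; first by rewrite /Aq !big_nil divr1.
move=> /andP[pr alls]; rewrite Aq_cons IH // !big_cons !natrM.
have r0 := prime_gt0 pr.
have Er : (r%:R : rat) = (r.-1)%:R + 1 by rewrite natr1 prednK.
have P0 : ((\prod_(r <- s) r)%N%:R : rat) != 0.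
  by rewrite pnatr_eq0 -lt0n prod_gt0.
rewrite Er; field; apply/andP; split => //.
by rewrite -Er pnatr_eq0 -lt0n.
Qed.

Lemma Bq_eq s : all prime s ->
  Bq s = (-1) ^+ size s * ((\prod_(r <- s) r.-1)%N)%:R.
Proof.
elim: s => [|r s IH] /=; first by rewrite /Bq !big_nil mulr1.
move=> /andP[pr alls]; rewrite Bq_cons IH // !big_cons natrM exprS.
have r0 := prime_gt0 pr.
have Er : (r%:R : rat) = (r.-1)%:R + 1 by rewrite natr1 prednK.
rewrite Er; ring.
Qed.

Lemma corr0 s M : (2 < \prod_(r <- s) r)%N -> corr s M = 0.
Proof.
case: s => [|q s']; first by rewrite big_nil.
rewrite /corr; case: eqP => // [[-> ->]]; by rewrite big_cons big_nil.
Qed.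

Lemma mod4_half (M : nat) : ~~ odd M -> (M %% 4 == 2)%N = odd M./2.
Proof.
move=> eM; have EM : M = (M./2 * 2)%N by rewrite muln2 halfK (negbTE eM) subn0.
have -> : odd M./2 = (M./2 %% 2 == 1)%N by rewrite modn2; case: (odd _).
by apply/eqP/eqP; lia.
Qed.

Lemma Js_Fq s : forall M : nat, uniq s -> all prime s -> (3 \notin s) ->
  all (fun q => q %| M)%N s -> (0 < M)%N -> (M %% 3 != 0)%N -> (Js s M)%:R = Fq s M.
Proof.
elim: s => [|p s IH] M us alls n3 dvs M0 M3; first exact: Fq_nil.
move: us => /andP[ps us]; move: alls => /andP[pp alls].
move: n3; rewrite in_cons negb_or => /andP[p3 n3]; rewrite eq_sym in p3.
move: dvs => /andP[pM dvs].
have Jr := Js_rec p s M pp p3 ps alls pM.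
have [m Em] : exists m, M = (p * m)%N by case/dvdnP: pM => k ->; exists k; rewrite mulnC.
have Emp : (M %/ p)%N = m by rewrite Em mulKn // prime_gt0.
have E : ((Js (p :: s) M)%:R : rat) = (Js s M)%:R - p%:R * (Js s m)%:R.
  by rewrite Jr natrD -Emp natrM addrK.
have m0 : (0 < m)%N by move: M0; rewrite Em muln_gt0 => /andP[].
have m3 : (m %% 3 != 0)%N.
  by apply: contra M3; rewrite Em => H; exact: dvdn_mull.
have dvm : all (fun q => q %| m)%N s.
  apply/allP => q qs; have := allP dvs q qs; rewrite /= Em Gauss_dvdr //.
  rewrite prime_coprime ?(allP alls) // (dvdn_prime2 ((allP alls) q qs) pp).
  by apply: contraNN ps => /eqP <-.
rewrite E (IH M) // (IH m) // Em Fq_rec //.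
Qed.

Local Close Scope ring_scope.

Theorem propositionA3 (M L : nat) :
  0 < M -> M %% 3 != 0 -> 0 < L -> L %| M -> 2 < radn L ->
  ((J 1 L M)%:R : rat) =
    ((totient (radn L))%:R *
      (((M ^ 2)%N)%:R / (radn L)%:R
       + (-1) ^+ size (primes L) * (8 - 9 * (eps L M)%:R)) / 24)%R.
Proof.
move=> M0 M3 L0 LM r2.
have us := primes_uniq L.
have alls : all prime (primes L) by apply/allP => q; rewrite mem_primes => /andP[].
have n3 : 3 \notin primes L.
  apply/negP; rewrite mem_primes => /and3P[_ _ d3]; move: M3.
  by have := dvdn_trans d3 LM; rewrite /dvdn => /eqP ->.
have dvs : all (fun q => q %| M) (primes L).
  by apply/allP => q; rewrite mem_primes => /and3P[_ _ dq]; exact: dvdn_trans dq LM.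
have JE : J 1 L M = Js (primes L) M.
  rewrite /J /Js big_mkcond [in RHS]big_mkcond [in RHS]big_ltn //.
  rewrite (_ : (if _ then 0 else 0) = 0); last by case: ifP.
  rewrite /= add0n; apply: eq_big_nat => u /andP[u1 _]; rewrite expn1.
  congr (if _ then _ else _); congr (_ && _ && _).
  rewrite coprime_has_primes // -all_predC; apply: eq_in_all => q qs /=.
  by rewrite mem_primes u1 (allP alls q qs).
have Eeps : epsq (primes L) M = (eps L M)%:R%R.
  rewrite /epsq /eps; case: ifP => // oM.
  rewrite mod4_half ?oM // /radn -dvdn2 prime_dvd_prodl //.
  by case: (_ && _).
have R0 : (((radn L)%:R : rat) != 0)%R by rewrite pnatr_eq0 -lt0n /radn prod_gt0.
rewrite JE (Js_Fq (primes L) M us alls n3 dvs M0 M3) /Fq (Aq_eq (primes L) alls) (Bq_eq (primes L) alls) corr0 // Eeps.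
move: R0; rewrite /radn totient_prod // => R0.
by field.
Qed.
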